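(* Let $L\ge0$ and, for $n\ge1$, let $\mathbb H_n$ be maps from $\mathbb X$ to subsets of $\mathbb R^N$, each $L$-separable (with the same $L$). If $\mathbb H(\theta)=\mathrm{cl}\big(\bigcup_{n\ge1}\mathbb H_n(\theta)\big)$ for all $\theta\in\mathbb X$, then $\mathbb H$ is $L$-separable.
   Context: $\mathbb X:=[0,T]\times\mathbb R^d\times\mathbb R^{dN}$ with elements $\theta=(t,x,z)$. A set-valued map $\mathbb G$ from $\mathbb X$ to subsets of $\mathbb R^N$ is called $L$-separable if there exist functions $H^n:\mathbb X\to\mathbb R^N$, $n\ge1$, such that $\mathbb G(\theta)=\mathrm{cl}\{H^n(\theta):n\ge1\}$ for each $\theta\in\mathbb X$, and each $H^n$ is measurable in $(t,x)$ and uniformly Lipschitz continuous in $z$ with common Lipschitz constant $L$. *)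

(* Defs.v *)
From HB Require Import structures.
From mathcomp Require Import all_boot all_order all_algebra.
From mathcomp Require Import all_classical all_reals all_analysis.
Set Implicit Arguments. Unset Strict Implicit. Unset Printing Implicit Defensive.
Import Order.TTheory GRing.Theory Num.Theory.
Local Open Scope classical_set_scope.
Local Open Scope ring_scope.
Import numFieldNormedType.Exports.

(* Euclidean (Frobenius) norm on real matrices; row vectors 'rV_N model R^N,
   d x N matrices model R^{dN}. *)
Definition enorm {R : realType} {m n : nat} (A : 'M[R]_(m, n)) : R :=
  Num.sqrt (\sum_(i < m) \sum_(j < n) (A i j) ^+ 2).

Definition borel_set {T : topologicalType} (A : set T) : Prop :=
  <<s [set G : set T | open G] >> A.

(* A set-valued map on X = [0,T] x R^d x R^{dN}, with values subsets of R^N. *)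
Definition setmap (R : realType) (d N : nat) :=
  R -> 'rV[R]_d -> 'M[R]_(d, N) -> set 'rV[R]_N.

Definition L_separable {R : realType} {d N : nat} (T L : R)
    (G : setmap R d N) : Prop :=
  exists H : nat -> R -> 'rV[R]_d -> 'M[R]_(d, N) -> 'rV[R]_N,
    (forall t x z, 0 <= t <= T -> G t x z = @closure [the topologicalType of 'rV[R]_N] (range (fun n => H n t x z)))
    /\ (forall n (z : 'M[R]_(d, N)) (U : set 'rV[R]_N), open U ->
          borel_set ([set p : R * 'rV[R]_d | 0 <= p.1 <= T]
                     `&` [set p | U (H n p.1 p.2 z)]))
    /\ (forall n t x z z', 0 <= t <= T ->
          enorm (H n t x z - H n t x z') <= L * enorm (z - z')).

(* Main.v *)
Require Import Defs.
From HB Require Import structures.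
From mathcomp Require Import all_boot all_order all_algebra.
From mathcomp Require Import all_classical all_reals all_analysis.
Import Order.TTheory GRing.Theory Num.Theory.
Local Open Scope classical_set_scope.
Local Open Scope ring_scope.
Import numFieldNormedType.Exports.

Definition unp (m : nat) : nat * nat :=
  match (unpickle m : option (nat * nat)) with Some p => p | None => (0%N, 0%N) end.

Lemma unpK (p : nat * nat) : unp (pickle p) = p.
Proof. by rewrite /unp pickleK. Qed.

Theorem lemma4p7 (R : realType) (d N : nat) (T L : R)
  (Hs : nat -> setmap R d N) (H : setmap R d N) :
  0 < T -> 0 <= L ->
  (forall n, L_separable T L (Hs n)) ->
  (forall t x z, 0 <= t <= T ->
     H t x z = @closure [the topologicalType of 'rV[R]_N] (\bigcup_n Hs n t x z)) ->
  L_separable T L H.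
Proof.
move=> _ _ hsep hH.
have [F hF] := choice (fun n => hsep n).
exists (fun m => F (unp m).1 (unp m).2).
split; last split.
- move=> t x z ht; rewrite hH //.
  set B := range (fun m => F (unp m).1 (unp m).2 t x z).
  have hA : forall n, Hs n t x z = closure (range (fun k => F n k t x z)).
    by move=> n; have [h _] := hF n; exact: h.
  apply/seteqP; split.
  + have sub : \bigcup_n Hs n t x z `<=` closure B.
      move=> y [n _]; rewrite hA; apply: closureS => _ [k _ <-].
      by exists (pickle (n, k)) => //; rewrite unpK.
    move=> y /(closureS sub).
    by rewrite -(proj1 (closure_id _)) //; exact: closed_closure.
  + apply: closureS => _ [m _ <-].
    exists (unp m).1 => //; rewrite hA; apply: subset_closure.
    by exists (unp m).2.
- move=> m z U oU; have [_ [h _]] := hF (unp m).1; exact: h.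
- move=> m t x z z' ht; have [_ [_ h]] := hF (unp m).1; exact: h.
Qed.
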